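(* Let $n\ge2$ and $x_j:=-\cos\frac{j\pi}{n}$ for $0\le j\le n$. For every integer $k$ with $1\le k\le n/2$, \[ \sum_{j=0}^{k-1}\frac{1}{x_k-x_j}\le\frac{1+k\log(4k-1)}{2\sin\frac{k\pi}{n}\,\sin\frac{k\pi}{2n}}\le\frac{n^2}{4\sqrt2\,k^2}\bigl(1+k\log(4k-1)\bigr) \] and \[ \sum_{j=k+1}^{n}\frac{1}{x_j-x_k}\le\frac{3n^2}{4\sqrt2\,k}\log(4k+1). \] In particular, for such $k$, $\sum_{j\neq k}\frac{1}{|x_k-x_j|}\le\frac{n^2}{4\sqrt2}(1+\log3+3\log5)<1.3\,n^2$. Moreover, $\sum_{j=1}^n\frac{1}{x_j-x_0}\le\frac{\pi^2n^2}{12}<0.9\,n^2$.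
   Context: $\log$ denotes the natural logarithm. *)

(* Defs.v *)
From Stdlib Require Export Reals.
From Coquelicot Require Export Coquelicot.
Open Scope R_scope.

Definition xnode (n j : nat) : R := - cos (INR j * PI / INR n).

(* Main.v *)
Require Import Defs.
From Stdlib Require Import Reals Lra Lia Psatz.
From Coquelicot Require Import Coquelicot.
Open Scope R_scope.

Lemma mono (f df : R -> R) (a b : R) : a <= b ->
  (forall c, a <= c <= b -> is_derive f c (df c)) ->
  (forall c, a <= c <= b -> 0 <= df c) -> f a <= f b.
Proof.
  intros Hab Hd Hp. destruct (Rle_lt_or_eq_dec _ _ Hab) as [Hl|He].
  - destruct (MVT_cor2 f df a b Hl) as [c [Hc1 Hc2]].
    + intros c Hc. apply is_derive_Reals. apply Hd; exact Hc.
    + assert (0 <= df c) by (apply Hp; lra). nra.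
  - subst; lra.
Qed.

Lemma sin_ge_xcos (x : R) : 0 <= x <= PI -> x * cos x <= sin x.
Proof.
  intros Hx.
  assert (H := mono (fun t => sin t - t * cos t) (fun t => t * sin t) 0 x (proj1 Hx)).
  cbv beta in H; rewrite sin_0, cos_0 in H.
  assert (0 - 0 * 1 <= sin x - x * cos x); [|lra].
  apply H.
  - intros c Hc. auto_derive; auto. ring.
  - intros c Hc. apply Rmult_le_pos; [lra|]. apply sin_ge_0; lra.
Qed.

Lemma cos_le (x t : R) : 0 <= x -> x <= t -> t <= PI -> cos t <= cos x.
Proof.
  intros. destruct (Rle_lt_or_eq_dec _ _ H0) as [Hl|He].
  - left; apply cos_decreasing_1; lra.
  - subst; lra.
Qed.

Lemma chord (x y : R) : 0 <= x -> x <= y -> y <= PI -> x * sin y <= y * sin x.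
Proof.
  intros H0 Hxy HyP.
  assert (H := mono (fun t => t * sin x - x * sin t) (fun t => sin x - x * cos t) x y Hxy).
  simpl in H.
  assert (x * sin x - x * sin x <= y * sin x - x * sin y); [|lra].
  apply H.
  - intros c Hc. auto_derive; auto. ring.
  - intros c Hc. assert (cos c <= cos x) by (apply cos_le; lra).
    assert (x * cos x <= sin x) by (apply sin_ge_xcos; lra). nra.
Qed.

Lemma ln_step (x : R) : 1 < x -> 2 / x <= ln (x + 1) - ln (x - 1).
Proof.
  intros Hx.
  set (u := / x).
  assert (Hu0 : 0 < u) by (unfold u; apply Rinv_0_lt_compat; lra).
  assert (Hu1 : u < 1) by (unfold u; rewrite <- Rinv_1; apply Rinv_lt_contravar; [rewrite Rmult_1_l|]; lra).
  assert (H := mono (fun t => ln (1 + t) - ln (1 - t) - 2 * t)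
     (fun t => / (1 + t) + / (1 - t) - 2) 0 u (Rlt_le _ _ Hu0)).
  cbv beta in H. rewrite Rplus_0_r, Rminus_0_r, ln_1 in H.
  assert (E1 : ln (x + 1) = ln (1 + u) + ln x).
  { rewrite <- ln_mult by lra. f_equal. unfold u. field. lra. }
  assert (E2 : ln (x - 1) = ln (1 - u) + ln x).
  { rewrite <- ln_mult by lra. f_equal. unfold u. field. lra. }
  assert (E3 : 2 / x = 2 * u) by (unfold u; field; lra).
  rewrite E1, E2, E3.
  assert (0 - 0 - 2 * 0 <= ln (1 + u) - ln (1 - u) - 2 * u); [|lra].
  apply H.
  - intros c Hc. auto_derive; try lra. field. lra.
  - intros c Hc. assert (0 < 1 + c) by lra. assert (0 < 1 - c) by lra.
    assert (/ (1 + c) + / (1 - c) - 2 = 2 * c * c / ((1 + c) * (1 - c))) by (field; lra).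
    rewrite H2. apply Rmult_le_pos. nra. left; apply Rinv_0_lt_compat; nra.
Qed.

Lemma exp_taylor4 (x : R) : 0 <= x -> 1 + x + x^2/2 + x^3/6 + x^4/24 <= exp x.
Proof.
  intros Hx.
  assert (H1 : forall t, 0 <= t -> 1 + t <= exp t) by (intros; apply exp_ineq1_le).
  assert (H2 : forall t, 0 <= t -> 1 + t + t^2/2 <= exp t).
  { intros t Ht. assert (H := mono (fun s => exp s - (1 + s + s^2/2)) (fun s => exp s - (1 + s)) 0 t Ht).
    cbv beta in H. rewrite exp_0 in H. assert (1 - (1 + 0 + 0^2/2) <= exp t - (1 + t + t^2/2)); [|lra].
    apply H. intros c Hc; auto_derive; auto; field. intros c Hc; specialize (H1 c); lra. }
  assert (H3 : forall t, 0 <= t -> 1 + t + t^2/2 + t^3/6 <= exp t).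
  { intros t Ht. assert (H := mono (fun s => exp s - (1 + s + s^2/2 + s^3/6)) (fun s => exp s - (1 + s + s^2/2)) 0 t Ht).
    cbv beta in H. rewrite exp_0 in H. assert (1 - (1 + 0 + 0^2/2 + 0^3/6) <= exp t - (1 + t + t^2/2 + t^3/6)); [|lra].
    apply H. intros c Hc; auto_derive; auto; field. intros c Hc; specialize (H2 c); lra. }
  assert (H := mono (fun s => exp s - (1 + s + s^2/2 + s^3/6 + s^4/24)) (fun s => exp s - (1 + s + s^2/2 + s^3/6)) 0 x Hx).
  cbv beta in H. rewrite exp_0 in H. assert (1 - (1 + 0 + 0^2/2 + 0^3/6 + 0^4/24) <= exp x - (1 + x + x^2/2 + x^3/6 + x^4/24)); [|lra].
  apply H. intros c Hc; auto_derive; auto; field. intros c Hc; specialize (H3 c); lra.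
Qed.

Lemma ln3_ub : ln 3 <= 12/10.
Proof.
  rewrite <- (ln_exp (12/10)). apply ln_le. lra.
  eapply Rle_trans; [|apply exp_taylor4; lra]. lra.
Qed.

Lemma ln5_ub : ln 5 <= 165/100.
Proof.
  rewrite <- (ln_exp (165/100)). apply ln_le. lra.
  eapply Rle_trans; [|apply exp_taylor4; lra]. lra.
Qed.


Lemma PI_lb : 31/10 < PI.
Proof.
  assert (31/20 < PI/2); [|lra].
  apply PI2_lower_bound;[split; lra | ].
  destruct (pre_cos_bound (31/20) 1) as [t _]; [lra | lra | ].
  apply Rlt_le_trans with (2 := t); clear t.
  unfold cos_approx; simpl; unfold cos_term.
  rewrite !INR_IZR_INZ. cbv -[IZR]. field_simplify. lra.
Qed.

Lemma PI_ub : PI < 32/10.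
Proof.
  assert (Hc : cos (16/10) < 0).
  { destruct (pre_cos_bound (16/10) 0) as [_ t]; [lra | lra | ].
    eapply Rle_lt_trans; [exact t|]. clear t.
    unfold cos_approx; simpl; unfold cos_term.
    rewrite !INR_IZR_INZ. cbv -[IZR]. field_simplify. lra. }
  destruct (Rlt_or_le PI (32/10)) as [H|H]; [exact H|].
  exfalso. destruct (Rle_lt_or_eq_dec (16/10) (PI/2)) as [Hl|He]; [lra| |].
  - assert (cos (PI/2) < cos (16/10)) by (apply cos_decreasing_1; lra).
    rewrite cos_PI2 in H0. lra.
  - rewrite He, cos_PI2 in Hc. lra.
Qed.

Lemma sin_lb3 (t : R) : 0 <= t <= PI -> t - t^3/6 <= sin t.
Proof.
  intros Ht. destruct (sin_bound t 0 (proj1 Ht) (proj2 Ht)) as [H _].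
  eapply Rle_trans; [|exact H].
  unfold sin_approx; simpl; unfold sin_term.
  rewrite !INR_IZR_INZ. simpl. lra.
Qed.

Ltac rring := match goal with |- ?x = ?y => change (@eq R x y); ring end.

Lemma sS (a : nat -> R) n m : (n <= S m)%nat -> sum_n_m a n (S m) = sum_n_m a n m + a (S m).
Proof. intros H. rewrite (sum_n_m_Chasles a n m (S m)) by lia. rewrite sum_n_n. reflexivity. Qed.

Lemma sL (a : nat -> R) n m : (n <= m)%nat -> sum_n_m a n m = a n + sum_n_m a (S n) m.
Proof. intros H. rewrite (sum_n_m_Chasles a n n m) by lia. rewrite sum_n_n. reflexivity. Qed.

Lemma sle (a b : nat -> R) n m : (forall j, (n <= j <= m)%nat -> a j <= b j) ->
  sum_n_m a n m <= sum_n_m b n m.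
Proof.
  intros H. rewrite (sum_n_m_ext_loc a (fun j => Rmin (a j) (b j)) n m).
  - apply sum_n_m_le. intros; apply Rmin_r.
  - intros j Hj. specialize (H j Hj). rewrite Rmin_left; auto.
Qed.

Lemma splus (a b : nat -> R) n m : sum_n_m (fun j => a j + b j) n m = sum_n_m a n m + sum_n_m b n m.
Proof. exact (sum_n_m_plus a b n m). Qed.

Lemma sscal (c : R) (a : nat -> R) n m : sum_n_m (fun j => c * a j) n m = c * sum_n_m a n m.
Proof. exact (sum_n_m_mult_l c a n m). Qed.

Lemma sminus (a b : nat -> R) n m : sum_n_m (fun j => a j - b j) n m = sum_n_m a n m - sum_n_m b n m.
Proof.
  unfold Rminus. rewrite splus.
  rewrite (sum_n_m_ext (fun j => - b j) (fun j => -1 * b j)) by (intros j; change (- b j = -1 * b j); ring).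
  rewrite sscal. change (@eq R (sum_n_m a n m + -1 * sum_n_m b n m) (sum_n_m a n m + - sum_n_m b n m)); ring.
Qed.

Lemma szero_le (a : nat -> R) n m : (forall j, (n <= j <= m)%nat -> 0 <= a j) -> 0 <= sum_n_m a n m.
Proof.
  intros H. eapply Rle_trans; [|apply (sle (fun _ => 0))]; auto.
  rewrite sum_n_m_const. lra.
Qed.

Lemma sshift (a : nat -> R) c n m : sum_n_m (fun j => a (j + c)%nat) n m = sum_n_m a (n + c) (m + c).
Proof.
  revert a n m; induction c; intros a n m.
  - rewrite !Nat.add_0_r. apply sum_n_m_ext; intros; now rewrite Nat.add_0_r.
  - transitivity (sum_n_m (fun i => a (i + c)%nat) (S n) (S m)).
    { rewrite <- sum_n_m_S. apply sum_n_m_ext. intros j. f_equal. lia. }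
    rewrite IHc. f_equal; lia.
Qed.

Lemma srev (a : nat -> R) m : sum_n_m (fun j => a (m - j)%nat) 0 m = sum_n_m a 0 m.
Proof.
  revert a; induction m; intros a.
  - rewrite !sum_n_n. reflexivity.
  - rewrite sL by lia. rewrite Nat.sub_0_r.
    rewrite <- sum_n_m_S.
    rewrite (sum_n_m_ext (fun n0 => a (S m - S n0)%nat) (fun j => a (m - j)%nat)) by (intros; f_equal).
    rewrite IHm. rewrite sS by lia. rring.
Qed.

Definition H (m : nat) : R := sum_n_m (fun i => / INR i) 1 m.

Lemma H0 : H 0 = 0.
Proof. unfold H. rewrite sum_n_m_zero by lia. reflexivity. Qed.

Lemma HS m : H (S m) = H m + / INR (S m).
Proof. unfold H. apply sS. lia. Qed.

Lemma Hmono m p : (m <= p)%nat -> H m <= H p.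
Proof.
  induction 1. lra. rewrite HS. assert (0 < / INR (S m0)).
  apply Rinv_0_lt_compat, lt_0_INR; lia. lra.
Qed.

Lemma Hln m : H m <= ln (2 * INR m + 1).
Proof.
  induction m.
  - rewrite H0. simpl. rewrite Rmult_0_r, Rplus_0_l, ln_1. lra.
  - rewrite HS, S_INR.
    assert (L := ln_step (2 * INR m + 2)).
    assert (0 <= INR m) by apply pos_INR.
    assert (2 / (2 * INR m + 2) <= ln (2 * INR m + 2 + 1) - ln (2 * INR m + 2 - 1)) by (apply L; lra).
    replace (2 * INR m + 2 - 1) with (2 * INR m + 1) in H2 by ring.
    replace (2 * INR m + 2 + 1) with (2 * (INR m + 1) + 1) in H2 by ring.
    replace (2 / (2 * INR m + 2)) with (/ (INR m + 1)) in H2 by (field; lra).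
    lra.
Qed.

Lemma part1_id (k : nat) : (1 <= k)%nat ->
  sum_n_m (fun j => INR k / (INR k - INR j) + INR k / (INR k + INR j)) 0 (k - 1)
  = 1 + INR k * H (2 * k - 1).
Proof.
  intros Hk. destruct k as [|p]; [lia|]. replace (S p - 1)%nat with p by lia.
  rewrite splus.
  rewrite (sum_n_m_ext (fun j => INR (S p) / (INR (S p) - INR j)) (fun j => INR (S p) * / (INR (S p) - INR j))) by reflexivity.
  rewrite (sum_n_m_ext (fun j => INR (S p) / (INR (S p) + INR j)) (fun j => INR (S p) * / (INR j + INR (S p)))) by (intros j; unfold Rdiv; rewrite Rplus_comm; reflexivity).
  rewrite !sscal.
  assert (EA : sum_n_m (fun j => / (INR (S p) - INR j)) 0 p = H (S p)).
  { etransitivity; [|etransitivity; [apply (srev (fun i => / INR (S i)) p)|]].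
    - apply sum_n_m_ext_loc. intros j Hj. cbv beta. f_equal. rewrite <- minus_INR by lia. f_equal. lia.
    - unfold H. rewrite <- sum_n_m_S. reflexivity. }
  assert (EB : sum_n_m (fun j => / (INR j + INR (S p))) 0 p = sum_n_m (fun i => / INR i) (S p) (p + S p)).
  { transitivity (sum_n_m (fun i => / INR i) (0 + S p) (p + S p)); [|reflexivity].
    rewrite <- (sshift (fun i => / INR i)). apply sum_n_m_ext. intros j. rewrite plus_INR. reflexivity. }
  rewrite EA, EB.
  replace (2 * S p - 1)%nat with (p + S p)%nat by lia.
  unfold H. rewrite (sum_n_m_Chasles _ 1 p (p + S p)) by lia.
  rewrite sS by lia.
  change (@eq R (INR (S p) * (sum_n_m (fun i : nat => / INR i) 1 p + / INR (S p)) +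
   INR (S p) * sum_n_m (fun i : nat => / INR i) (S p) (p + S p))
   (1 + INR (S p) * (sum_n_m (fun i : nat => / INR i) 1 p + sum_n_m (fun i : nat => / INR i) (S p) (p + S p)))).
  field. apply not_0_INR. lia.
Qed.

Lemma part2_sum (k n : nat) : (2 * k <= n)%nat ->
  sum_n_m (fun j => / (INR j - INR k) - / (INR j + INR k)) (k + 1) n <= H (2 * k).
Proof.
  intros Hkn. rewrite sminus.
  assert (EA : sum_n_m (fun j => / (INR j - INR k)) (k + 1) n = H (n - k)).
  { replace (k + 1)%nat with (1 + k)%nat by lia.
    replace n with (n - k + k)%nat at 1 by lia.
    rewrite <- (sshift (fun j => / (INR j - INR k))). unfold H.
    apply sum_n_m_ext. intros j. rewrite plus_INR. f_equal. ring. }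
  assert (EB : sum_n_m (fun j => / (INR j + INR k)) (k + 1) n = sum_n_m (fun i => / INR i) (S (2 * k)) (n + k)).
  { replace (S (2 * k)) with (k + 1 + k)%nat by lia.
    rewrite <- (sshift (fun i => / INR i)). apply sum_n_m_ext. intros j. rewrite plus_INR. reflexivity. }
  rewrite EA, EB.
  assert (EH : H (n + k) = H (2 * k) + sum_n_m (fun i => / INR i) (S (2 * k)) (n + k)).
  { unfold H. rewrite (sum_n_m_Chasles (fun i => / INR i) 1 (2*k) (n+k)) by lia; reflexivity. }
  assert (Hm : H (n - k) <= H (n + k)) by (apply Hmono; lia).
  change (H (n - k) - sum_n_m (fun i => / INR i) (S (2 * k)) (n + k) <= H (2 * k)).
  lra.
Qed.

Lemma sq_sum (n : nat) : (2 <= n)%nat -> sum_n_m (fun j => / INR j ^ 2) 1 n <= 7/4 - / INR n.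
Proof.
  induction 1.
  - rewrite sS by lia. rewrite sum_n_n. simpl. lra.
  - rewrite sS by lia. 
    assert (2 <= INR m) by (replace 2 with (INR 2) by (simpl; ring); apply le_INR; lia).
    rewrite S_INR.
    assert (/ (INR m + 1) ^ 2 <= / INR m - / (INR m + 1)).
    { apply Rmult_le_reg_r with (INR m * (INR m + 1) ^ 2). nra.
      field_simplify; try lra. }
    change (sum_n_m (fun j : nat => / INR j ^ 2) 1 m + / (INR m + 1) ^ 2 <= 7 / 4 - / (INR m + 1)). lra.
Qed.


Lemma xdiff (n j k : nat) : (1 <= n)%nat ->
  xnode n k - xnode n j = 2 * sin ((INR k - INR j) * (PI / (2 * INR n))) * sin ((INR k + INR j) * (PI / (2 * INR n))).
Proof.
  intros Hn. assert (0 < INR n) by (apply lt_0_INR; lia).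
  unfold xnode.
  replace (- cos (INR k * PI / INR n) - - cos (INR j * PI / INR n)) with
    (cos (INR j * PI / INR n) - cos (INR k * PI / INR n)) by ring.
  rewrite form2.
  replace ((INR j * PI / INR n - INR k * PI / INR n) / 2) with (- ((INR k - INR j) * (PI / (2 * INR n)))) by (field; lra).
  replace ((INR j * PI / INR n + INR k * PI / INR n) / 2) with ((INR k + INR j) * (PI / (2 * INR n))) by (field; lra).
  rewrite sin_neg. ring.
Qed.

Lemma chord' (x y : R) : 0 <= x -> x <= y -> y <= PI -> 0 < y -> x / y * sin y <= sin x.
Proof.
  intros. assert (x * sin y <= y * sin x) by (apply chord; lra).
  apply Rmult_le_reg_l with y; auto. replace (y * (x / y * sin y)) with (x * sin y) by (field; lra). lra.
Qed.

Lemma inv_le (p q r : R) : 0 < p -> 0 < q -> q <= r * p -> 1 / p <= r / q.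
Proof.
  intros. unfold Rdiv. apply Rmult_le_reg_r with (p * q). nra.
  replace (1 * / p * (p * q)) with q by (field; lra).
  replace (r * / q * (p * q)) with (r * p) by (field; lra). lra.
Qed.

Lemma term1 (n k j : nat) : (1 <= k)%nat -> (2 * k <= n)%nat -> (j < k)%nat ->
  0 < xnode n k - xnode n j /\
  1 / (xnode n k - xnode n j) <=
    (INR k / (INR k - INR j) + INR k / (INR k + INR j)) /
    (2 * sin (INR k * PI / INR n) * sin (INR k * PI / (2 * INR n))).
Proof.
  intros Hk Hkn Hj.
  assert (HN : 0 < INR n) by (apply lt_0_INR; lia).
  assert (HK : 1 <= INR k) by (replace 1 with (INR 1) by reflexivity; apply le_INR; lia).
  assert (HKN : 2 * INR k <= INR n) by (replace 2 with (INR 2) by reflexivity; rewrite <- mult_INR; apply le_INR; lia).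
  assert (HJ0 : 0 <= INR j) by apply pos_INR.
  assert (HJK : INR j + 1 <= INR k) by (rewrite <- S_INR; apply le_INR; lia).
  pose proof PI_RGT_0 as HPI.
  set (h := PI / (2 * INR n)).
  assert (Hh : 0 < h) by (unfold h; apply Rdiv_lt_0_compat; lra).
  assert (HKh : INR k * h <= PI / 4).
  { unfold h. apply Rmult_le_reg_r with (4 * INR n / PI). apply Rdiv_lt_0_compat; lra.
    replace (INR k * (PI / (2 * INR n)) * (4 * INR n / PI)) with (2 * INR k) by (field; lra).
    replace (PI / 4 * (4 * INR n / PI)) with (INR n) by (field; lra). lra. }
  assert (E1 : INR k * PI / (2 * INR n) = INR k * h) by (unfold h; field; lra).
  assert (E2 : INR k * PI / INR n = 2 * INR k * h) by (unfold h; field; lra).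
  rewrite E1, E2, xdiff by lia. fold h.
  set (S1 := sin (INR k * h)). set (S2 := sin (2 * INR k * h)).
  set (A := sin ((INR k - INR j) * h)). set (B := sin ((INR k + INR j) * h)).
  assert (HS1 : 0 < S1) by (apply sin_gt_0; nra).
  assert (HS2 : 0 < S2) by (apply sin_gt_0; nra).
  assert (HA : (INR k - INR j) / INR k * S1 <= A).
  { replace ((INR k - INR j) / INR k) with ((INR k - INR j) * h / (INR k * h)) by (field; lra).
    apply chord'; nra. }
  assert (HB : (INR k + INR j) / (2 * INR k) * S2 <= B).
  { replace ((INR k + INR j) / (2 * INR k)) with ((INR k + INR j) * h / (2 * INR k * h)) by (field; lra).
    apply chord'; nra. }
  set (a := (INR k - INR j) / INR k * S1) in *.
  set (b := (INR k + INR j) / (2 * INR k) * S2) in *.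
  assert (Ha : 0 < a) by (unfold a; apply Rmult_lt_0_compat; [apply Rdiv_lt_0_compat|]; lra).
  assert (Hb : 0 < b) by (unfold b; apply Rmult_lt_0_compat; [apply Rdiv_lt_0_compat|]; lra).
  split. nra.
  replace ((INR k / (INR k - INR j) + INR k / (INR k + INR j)) / (2 * S2 * S1)) with (1 / (2 * a * b)).
  - apply inv_le; nra.
  - unfold a, b. field. repeat split; lra.
Qed.

Lemma term2 (n k j : nat) : (1 <= k)%nat -> (2 * k <= n)%nat -> (k + 1 <= j <= n)%nat ->
  0 < xnode n j - xnode n k /\
  1 / (xnode n j - xnode n k) <=
    3 * INR n ^ 2 / (4 * sqrt 2 * INR k) * (/ (INR j - INR k) - / (INR j + INR k)).
Proof.
  intros Hk Hkn Hj.
  assert (HN : 0 < INR n) by (apply lt_0_INR; lia).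
  assert (HK : 1 <= INR k) by (replace 1 with (INR 1) by reflexivity; apply le_INR; lia).
  assert (HKN : 2 * INR k <= INR n) by (replace 2 with (INR 2) by reflexivity; rewrite <- mult_INR; apply le_INR; lia).
  assert (HJK : INR k + 1 <= INR j) by (rewrite <- S_INR; apply le_INR; lia).
  assert (HJN : INR j <= INR n) by (apply le_INR; lia).
  pose proof PI_RGT_0 as HPI.
  set (h := PI / (2 * INR n)).
  assert (Hh : 0 < h) by (unfold h; apply Rdiv_lt_0_compat; lra).
  assert (Hnh : INR n * h = PI / 2) by (unfold h; field; lra).
  rewrite xdiff by lia. fold h.
  set (A := sin ((INR j - INR k) * h)). set (B := sin ((INR j + INR k) * h)).
  set (s := sqrt 2).
  assert (Hs : 0 < s) by (unfold s; apply sqrt_lt_R0; lra).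
  assert (Hss : s * s = 2) by (unfold s; apply sqrt_sqrt; lra).
  assert (HA : (INR j - INR k) / INR n <= A).
  { replace ((INR j - INR k) / INR n) with ((INR j - INR k) * h / (PI / 2) * sin (PI / 2)).
    apply chord'; nra.
    rewrite sin_PI2. rewrite <- Hnh. field. lra. }
  assert (HB : (INR j + INR k) * s / (3 * INR n) <= B).
  { replace ((INR j + INR k) * s / (3 * INR n)) with ((INR j + INR k) * h / (3 * PI / 4) * sin (3 * PI / 4)).
    apply chord'; nra.
    replace (3 * PI / 4) with (PI - PI / 4) by field. rewrite sin_PI_x, sin_PI4. fold s.
    replace (PI - PI / 4) with (3 * (INR n * h) / 2) by (rewrite Hnh; field).
    apply Rmult_eq_reg_l with s; [|lra]. field_simplify; try lra. replace (s ^ 2) with 2 by (rewrite <- Hss; ring). reflexivity. }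
  set (a := (INR j - INR k) / INR n) in *.
  set (b := (INR j + INR k) * s / (3 * INR n)) in *.
  assert (Ha : 0 < a) by (unfold a; apply Rdiv_lt_0_compat; lra).
  assert (Hb : 0 < b) by (unfold b; apply Rdiv_lt_0_compat; nra).
  split. nra.
  replace (3 * INR n ^ 2 / (4 * s * INR k) * (/ (INR j - INR k) - / (INR j + INR k))) with (1 / (2 * a * b)).
  - apply inv_le; nra.
  - unfold a, b. field. repeat split; lra.
Qed.

Lemma term0 (n j : nat) : (1 <= j <= n)%nat ->
  0 < xnode n j - xnode n 0 /\
  1 / (xnode n j - xnode n 0) <= 2 * INR n ^ 2 / PI ^ 2 * / INR j ^ 2 + 1.
Proof.
  intros Hj.
  assert (HN : 0 < INR n) by (apply lt_0_INR; lia).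
  assert (HJ : 1 <= INR j) by (replace 1 with (INR 1) by reflexivity; apply le_INR; lia).
  assert (HJN : INR j <= INR n) by (apply le_INR; lia).
  pose proof PI_RGT_0 as HPI. pose proof PI_ub as HPu.
  set (h := PI / (2 * INR n)).
  assert (Hh : 0 < h) by (unfold h; apply Rdiv_lt_0_compat; lra).
  assert (Hnh : INR n * h = PI / 2) by (unfold h; field; lra).
  rewrite xdiff by lia. fold h. simpl INR. rewrite Rminus_0_r, Rplus_0_r.
  set (t := INR j * h). set (S := sin t).
  assert (Ht0 : 0 < t) by (unfold t; nra).
  assert (Ht2 : t <= PI / 2) by (unfold t; nra).
  assert (HS : t - t^3/6 <= S) by (apply sin_lb3; lra).
  assert (Hs0 : 0 < t - t^3/6) by nra.
  assert (Hpoly : t ^ 2 <= (t - t^3/6)^2 * (1 + 2 * t^2)).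
  { assert (E : (t - t^3/6)^2 * (1 + 2 * t^2) - t^2 = t^2 * (t^2 / 18) * ((4 - t^2) * (15/2 - t^2))) by field.
    assert (0 <= t^2 * (t^2 / 18) * ((4 - t^2) * (15/2 - t^2))).
    { apply Rmult_le_pos. apply Rmult_le_pos; nra. apply Rmult_le_pos; nra. }
    lra. }
  assert (HSS : t ^ 2 <= S ^ 2 * (1 + 2 * t^2)).
  { eapply Rle_trans; [exact Hpoly|]. apply Rmult_le_compat_r. nra.
    apply pow_incr; lra. }
  split. nra.
  replace (2 * INR n ^ 2 / PI ^ 2 * / INR j ^ 2 + 1) with ((1 + 2 * t^2) / (2 * t^2)).
  - apply inv_le; nra.
  - assert (EP : PI = 2 * (INR n * h)) by lra. unfold t. rewrite EP. field. split; lra.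
Qed.

Lemma Cbound (n k : nat) : (1 <= k)%nat -> (2 * k <= n)%nat ->
  0 < 4 * sqrt 2 * INR k ^ 2 / INR n ^ 2 /\
  4 * sqrt 2 * INR k ^ 2 / INR n ^ 2 <= 2 * sin (INR k * PI / INR n) * sin (INR k * PI / (2 * INR n)).
Proof.
  intros Hk Hkn.
  assert (HN : 0 < INR n) by (apply lt_0_INR; lia).
  assert (HK : 1 <= INR k) by (replace 1 with (INR 1) by reflexivity; apply le_INR; lia).
  assert (HKN : 2 * INR k <= INR n) by (replace 2 with (INR 2) by reflexivity; rewrite <- mult_INR; apply le_INR; lia).
  pose proof PI_RGT_0 as HPI.
  set (s := sqrt 2).
  assert (Hs : 0 < s) by (unfold s; apply sqrt_lt_R0; lra).
  assert (Hss : s * s = 2) by (unfold s; apply sqrt_sqrt; lra).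
  assert (H1 : 2 * INR k / INR n <= sin (INR k * PI / INR n)).
  { replace (2 * INR k / INR n) with ((INR k * PI / INR n) / (PI / 2) * sin (PI / 2)).
    apply chord'.
    - apply Rdiv_le_0_compat; nra.
    - apply Rmult_le_reg_r with (INR n); auto. field_simplify; nra.
    - lra.
    - lra.
    - rewrite sin_PI2. field; lra. }
  assert (H2 : s * INR k / INR n <= sin (INR k * PI / (2 * INR n))).
  { replace (s * INR k / INR n) with ((INR k * PI / (2 * INR n)) / (PI / 4) * sin (PI / 4)).
    apply chord'.
    - apply Rdiv_le_0_compat; nra.
    - apply Rmult_le_reg_r with (4 * INR n); [lra|]. field_simplify; nra.
    - lra.
    - lra.
    - rewrite sin_PI4. fold s. apply Rmult_eq_reg_l with s; [|lra]. field_simplify; try lra.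
      replace (s ^ 2) with 2 by (rewrite <- Hss; ring). field. lra. }
  assert (0 < 2 * INR k / INR n) by (apply Rdiv_lt_0_compat; lra).
  assert (0 < s * INR k / INR n) by (apply Rdiv_lt_0_compat; nra).
  split.
  - apply Rdiv_lt_0_compat; nra.
  - replace (4 * s * INR k ^ 2 / INR n ^ 2) with (2 * (2 * INR k / INR n) * (s * INR k / INR n)) by (field; lra).
    apply Rmult_le_compat; nra.
Qed.

Lemma pow3 (k : nat) : (1 <= k)%nat -> 4 * INR k - 1 <= 3 ^ k.
Proof.
  induction 1. simpl; lra.
  rewrite S_INR. simpl pow. assert (1 <= INR m) by (replace 1 with (INR 1) by reflexivity; apply le_INR; lia). lra.
Qed.

Lemma pow5 (k : nat) : 4 * INR k + 1 <= 5 ^ k.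
Proof.
  induction k. simpl; lra.
  rewrite S_INR. simpl pow. assert (0 <= INR k) by apply pos_INR. lra.
Qed.

Theorem lemma8 (n : nat) (Hn : (2 <= n)%nat) :
  (forall k : nat, (1 <= k)%nat -> (2 * k <= n)%nat ->
     (sum_n_m (fun j => 1 / (xnode n k - xnode n j)) 0 (k - 1)
        <= (1 + INR k * ln (4 * INR k - 1))
           / (2 * sin (INR k * PI / INR n) * sin (INR k * PI / (2 * INR n)))
      /\ (1 + INR k * ln (4 * INR k - 1))
           / (2 * sin (INR k * PI / INR n) * sin (INR k * PI / (2 * INR n)))
         <= INR n ^ 2 / (4 * sqrt 2 * INR k ^ 2) * (1 + INR k * ln (4 * INR k - 1)))
  /\ sum_n_m (fun j => 1 / (xnode n j - xnode n k)) (k + 1) n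
       <= 3 * INR n ^ 2 / (4 * sqrt 2 * INR k) * ln (4 * INR k + 1)
  /\ sum_n_m (fun j => if Nat.eqb j k then 0 else 1 / Rabs (xnode n k - xnode n j)) 0 n
       <= INR n ^ 2 / (4 * sqrt 2) * (1 + ln 3 + 3 * ln 5)
  /\ INR n ^ 2 / (4 * sqrt 2) * (1 + ln 3 + 3 * ln 5) < 13 / 10 * INR n ^ 2)
  /\
  (sum_n_m (fun j => 1 / (xnode n j - xnode n 0)) 1 n <= PI ^ 2 * INR n ^ 2 / 12
   /\ PI ^ 2 * INR n ^ 2 / 12 < 9 / 10 * INR n ^ 2).
Proof.
  assert (HN : 2 <= INR n) by (replace 2 with (INR 2) by reflexivity; apply le_INR; lia).
  pose proof PI_lb as HPl. pose proof PI_ub as HPu.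
  set (s := sqrt 2).
  assert (Hs : 0 < s) by (unfold s; apply sqrt_lt_R0; lra).
  assert (Hss : s * s = 2) by (unfold s; apply sqrt_sqrt; lra).
  split.
  - intros k Hk Hkn.
    assert (HK : 1 <= INR k) by (replace 1 with (INR 1) by reflexivity; apply le_INR; lia).
    set (C := 2 * sin (INR k * PI / INR n) * sin (INR k * PI / (2 * INR n))).
    destruct (Cbound n k Hk Hkn) as [HC0 HC]. fold s C in HC0, HC.
    assert (HCp : 0 < C) by lra.
    assert (Hl3 : 0 <= ln (4 * INR k - 1)) by (rewrite <- ln_1; apply ln_le; lra).
    assert (Hl5 : 0 <= ln (4 * INR k + 1)) by (rewrite <- ln_1; apply ln_le; lra).
    set (P := 1 + INR k * ln (4 * INR k - 1)).
    assert (HP : 0 <= P) by (unfold P; nra).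
    assert (P1 : sum_n_m (fun j => 1 / (xnode n k - xnode n j)) 0 (k - 1) <= P / C).
    { eapply Rle_trans.
      { apply (sle _ (fun j => / C * (INR k / (INR k - INR j) + INR k / (INR k + INR j)))).
        intros j Hj. destruct (term1 n k j Hk Hkn) as [_ T]; [lia|]. fold C in T.
        rewrite Rmult_comm. exact T. }
      rewrite sscal, part1_id by lia.
      assert (HH : H (2 * k - 1) <= ln (4 * INR k - 1)).
      { eapply Rle_trans; [apply Hln|]. rewrite minus_INR, mult_INR by lia. simpl INR.
        apply Req_le; f_equal; ring. }
      unfold P. unfold Rdiv. rewrite Rmult_comm. apply Rmult_le_compat_r.
      left; apply Rinv_0_lt_compat; lra. nra. }
    assert (P1b : P / C <= INR n ^ 2 / (4 * s * INR k ^ 2) * P).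
    { rewrite Rmult_comm. unfold Rdiv. apply Rmult_le_compat_l; auto.
      replace (INR n ^ 2 * / (4 * s * INR k ^ 2)) with (/ (4 * s * INR k ^ 2 / INR n ^ 2)) by (field; split; nra).
      apply Rinv_le_contravar; auto. }
    assert (P2 : sum_n_m (fun j => 1 / (xnode n j - xnode n k)) (k + 1) n
       <= 3 * INR n ^ 2 / (4 * s * INR k) * ln (4 * INR k + 1)).
    { eapply Rle_trans.
      { apply (sle _ (fun j => 3 * INR n ^ 2 / (4 * s * INR k) * (/ (INR j - INR k) - / (INR j + INR k)))).
        intros j Hj. destruct (term2 n k j Hk Hkn Hj) as [_ T]. exact T. }
      rewrite sscal. apply Rmult_le_compat_l.
      apply Rdiv_le_0_compat; nra.
      eapply Rle_trans; [apply part2_sum; auto|].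
      eapply Rle_trans; [apply Hln|]. rewrite mult_INR. simpl INR.
      apply Req_le; f_equal; ring. }
    assert (L3 : ln (4 * INR k - 1) <= INR k * ln 3).
    { rewrite <- ln_pow by lra. apply ln_le. lra. apply pow3; auto. }
    assert (L5 : ln (4 * INR k + 1) <= INR k * ln 5).
    { rewrite <- ln_pow by lra. apply ln_le. lra. apply pow5. }
    assert (Hln3 : 0 <= ln 3) by (rewrite <- ln_1; apply ln_le; lra).
    assert (Hln5 : 0 <= ln 5) by (rewrite <- ln_1; apply ln_le; lra).
    set (c := INR n ^ 2 / (4 * s)).
    assert (Hc : 0 <= c) by (unfold c; apply Rdiv_le_0_compat; nra).
    assert (Q1 : INR n ^ 2 / (4 * s * INR k ^ 2) * P <= c * (1 + ln 3)).
    { replace (INR n ^ 2 / (4 * s * INR k ^ 2) * P) with (c * (P / INR k ^ 2)) by (unfold c; field; lra).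
      apply Rmult_le_compat_l; auto.
      apply Rmult_le_reg_r with (INR k ^ 2). nra.
      replace (P / INR k ^ 2 * INR k ^ 2) with P by (field; lra).
      unfold P. assert (INR k * ln (4 * INR k - 1) <= INR k * (INR k * ln 3)) by (apply Rmult_le_compat_l; lra).
      assert (INR k ^ 2 * ln 3 <= INR k ^ 2 * ln 3) by lra. nra. }
    assert (Q2 : 3 * INR n ^ 2 / (4 * s * INR k) * ln (4 * INR k + 1) <= c * (3 * ln 5)).
    { replace (3 * INR n ^ 2 / (4 * s * INR k) * ln (4 * INR k + 1)) with (c * (3 * (ln (4 * INR k + 1) / INR k))) by (unfold c; field; lra).
      apply Rmult_le_compat_l; auto. apply Rmult_le_compat_l; [lra|].
      apply Rmult_le_reg_r with (INR k). lra.
      replace (ln (4 * INR k + 1) / INR k * INR k) with (ln (4 * INR k + 1)) by (field; lra). lra. }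
    split; [split; auto|].
    split; [auto|].
    split.
    +
      rewrite (sum_n_m_Chasles _ 0 (k - 1) n) by lia.
      replace (S (k - 1)) with k by lia.
      rewrite (sL _ k n) by lia. rewrite Nat.eqb_refl.
      rewrite (sum_n_m_ext_loc (fun j => if Nat.eqb j k then 0 else 1 / Rabs (xnode n k - xnode n j))
                 (fun j => 1 / (xnode n k - xnode n j)) 0 (k - 1)).
      2:{ intros j Hj. destruct (Nat.eqb_spec j k); [lia|].
          destruct (term1 n k j Hk Hkn) as [T _]; [lia|]. rewrite Rabs_pos_eq; lra. }
      rewrite (sum_n_m_ext_loc (fun j => if Nat.eqb j k then 0 else 1 / Rabs (xnode n k - xnode n j))
                 (fun j => 1 / (xnode n j - xnode n k)) (S k) n).
      2:{ intros j Hj. destruct (Nat.eqb_spec j k); [lia|].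
          destruct (term2 n k j Hk Hkn) as [T _]; [lia|]. rewrite Rabs_minus_sym, Rabs_pos_eq; lra. }
      replace (S k) with (k + 1)%nat by lia.
      change (sum_n_m (fun j => 1 / (xnode n k - xnode n j)) 0 (k - 1) + (0 + sum_n_m (fun j => 1 / (xnode n j - xnode n k)) (k + 1) n)
        <= INR n ^ 2 / (4 * s) * (1 + ln 3 + 3 * ln 5)).
      fold c. lra.
    +
      fold c. unfold c.
      assert (Hs2 : 141/100 < s) by nra.
      pose proof ln3_ub. pose proof ln5_ub.
      apply Rmult_lt_reg_r with (4 * s). lra.
      replace (INR n ^ 2 / (4 * s) * (1 + ln 3 + 3 * ln 5) * (4 * s)) with (INR n ^ 2 * (1 + ln 3 + 3 * ln 5)) by (field; lra).
      assert (0 < INR n ^ 2) by nra.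
      assert (1 + ln 3 + 3 * ln 5 < 13 / 10 * (4 * s)) by lra.
      nra.
  - assert (HN0 : 0 < INR n) by lra.
    split.
    + eapply Rle_trans.
      { apply (sle _ (fun j => 2 * INR n ^ 2 / PI ^ 2 * / INR j ^ 2 + 1)).
        intros j Hj. destruct (term0 n j Hj) as [_ T]. exact T. }
      rewrite splus, sscal, sum_n_m_const.
      replace (S n - 1)%nat with n by lia.
      pose proof (sq_sum n Hn) as SQ.
      assert (HP2 : 961/100 < PI ^ 2) by nra.
      set (Q := sum_n_m (fun j : nat => / INR j ^ 2) 1 n) in *.
      change (2 * INR n ^ 2 / PI ^ 2 * Q + INR n * 1 <= PI ^ 2 * INR n ^ 2 / 12).
      assert (2 * INR n ^ 2 / PI ^ 2 * Q <= 2 * INR n ^ 2 / PI ^ 2 * (7/4 - / INR n)).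
      { apply Rmult_le_compat_l; auto. apply Rdiv_le_0_compat; nra. }
      eapply Rle_trans. apply Rplus_le_compat_r. exact H1.
      set (X := PI ^ 2) in *.
      replace (2 * INR n ^ 2 / X * (7 / 4 - / INR n) + INR n * 1) with
        ((7/2 * INR n ^ 2 - 2 * INR n + X * INR n) / X) by (field; lra).
      apply Rmult_le_reg_r with X. lra.
      replace ((7 / 2 * INR n ^ 2 - 2 * INR n + X * INR n) / X * X) with (7 / 2 * INR n ^ 2 - 2 * INR n + X * INR n) by (field; lra).
      assert (X * X - 6 * X - 30 >= 0) by nra.
      assert (A1 : 0 <= X * X / 12 - 7 / 2) by nra.
      assert (A2 : 0 <= (X * X / 12 - 7 / 2) * (INR n - 2)) by (apply Rmult_le_pos; lra).
      assert (A3 : 0 <= INR n * ((X * X / 12 - 7 / 2) * INR n - X + 2)) by (apply Rmult_le_pos; lra).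
      assert (E : X * INR n ^ 2 / 12 * X - (7 / 2 * INR n ^ 2 - 2 * INR n + X * INR n) = INR n * ((X * X / 12 - 7 / 2) * INR n - X + 2)) by field.
      lra.
    + assert (PI ^ 2 < 108/10) by nra. assert (0 < INR n ^ 2) by nra.
      replace (PI ^ 2 * INR n ^ 2 / 12) with (PI ^ 2 / 12 * INR n ^ 2) by field.
      apply Rmult_lt_compat_r; lra.
Qed.
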